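(* Let $n\ge k\ge 1$ and let $Z_1,\ldots,Z_k$ be subsets of $[n]$, each of cardinality $k-1$, such that $|\bigcap_{i\in I}Z_i|\le k-|I|$ for every nonempty subset $I\subseteq[k]$, and additionally $|Z_i\cap Z_{i'}|\le 1$ for all $i\ne i'$. Then there is a multiset that arises as the multiset union of exactly one choice $(\sigma,(S_1,\ldots,S_k))$.
   Context: $[n]=\{1,\ldots,n\}$. A choice is a pair $(\sigma,(S_1,\ldots,S_k))$ where $\sigma$ is a permutation of $[k]$ and $S_i\subseteq Z_i$ with $|S_i|=\sigma(i)-1$ for each $i\in[k]$; its multiset union is $S_1\uplus\cdots\uplus S_k$, the multiset in which each $j\in[n]$ has multiplicity equal to the number of $i$ with $j\in S_i$. Two different choices are counted as different even if they have the same permutation (i.e., choices differ if either $\sigma$ or some $S_i$ differs). *)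

(* Defs.v *)
From mathcomp Require Import all_boot all_order all_fingroup.
Set Implicit Arguments.
Unset Strict Implicit.
Unset Printing Implicit Defensive.

(* [n] is represented by 'I_n (element j stands for j+1), [k] by 'I_k.
   A permutation sigma of [k] (values 1..k) is represented 0-based by
   s : {perm 'I_k}, with s i = sigma(i) - 1; so |S_i| = sigma(i)-1 becomes
   #|S_i| = s i. *)

Definition choice_t (n k : nat) : finType :=
  ({perm 'I_k} * {ffun 'I_k -> {set 'I_n}})%type.

Definition is_choice (n k : nat) (Z : 'I_k -> {set 'I_n}) (c : choice_t n k) : bool :=
  [forall i : 'I_k, (c.2 i \subset Z i) && (#|c.2 i| == nat_of_ord (c.1 i))].

Definition munion (n k : nat) (S : {ffun 'I_k -> {set 'I_n}}) : {ffun 'I_n -> nat} :=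
  [ffun j : 'I_n => #|[set i : 'I_k | j \in S i]|].

(* Main.v *)
Require Import Defs.
From mathcomp Require Import all_boot all_order all_fingroup.
From mathcomp Require Import zify.
Set Implicit Arguments.
Unset Strict Implicit.
Unset Printing Implicit Defensive.

Lemma cardU_le (T : finType) (A B : {set T}) : #|A :|: B| <= #|A| + #|B|.
Proof. by rewrite cardsU leq_subr. Qed.

Lemma ex_sub (T : finType) (D : {set T}) m : m <= #|D| ->
  exists N : {set T}, N \subset D /\ #|N| = m.
Proof.
elim: m => [|m IH] h; first by exists set0; rewrite sub0set cards0.
have [N [ND Nc]] := IH (ltnW h).
have : N \proper D by rewrite properEcard ND Nc h.
case/properP => _ [x xD xN].
exists (x |: N); split; first by rewrite subUset sub1set xD ND.
by rewrite cardsU1 xN Nc.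
Qed.

Section Exist.
Variables (n K : nat) (Z : 'I_K.+1 -> {set 'I_n}) (vv : nat -> 'I_K.+1).
Hypothesis HZ : forall i, #|Z i| = K.
Hypothesis Hpair : forall p q, p <= K -> q <= K -> p != q -> #|Z (vv p) :&: Z (vv q)| <= 1.
Definition Y := Z (vv K.-1) :&: Z (vv K).
Hypothesis HY : Y :&: Z (vv 0) = set0.

Definition UN (T : nat -> {set 'I_n}) p := \bigcup_(r < p.+1) T r.

Lemma UNS (T : nat -> {set 'I_n}) p : UN T p.+1 = UN T p :|: T p.+1.
Proof. by rewrite /UN big_ord_recr. Qed.

Lemma UNP (T : nat -> {set 'I_n}) p x : reflect (exists2 r, r <= p & x \in T r) (x \in UN T p).
Proof.
apply: (iffP bigcupP) => [[r _ xr]|[r rp xr]].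
  by exists r => //; rewrite -ltnS.
by exists (Ordinal (rp : r < p.+1)).
Qed.

Definition Inv (T : nat -> {set 'I_n}) q :=
  [/\ T q \subset Z (vv q), #|T q| = q,
      (forall r, r < q -> T r :&: Z (vv q) \subset T q),
      (0 < q -> Z (vv q.-1) :&: T q \subset T q.-1) &
      Y :&: Z (vv q) \subset T q].

Lemma Inv_ext (T T' : nat -> {set 'I_n}) q : (forall r, r <= q -> T' r = T r) -> Inv T q -> Inv T' q.
Proof.
move=> E [a b c d e]; rewrite /Inv (E q) //; split => //.
- by move=> r rq; rewrite (E r) ?(ltnW rq) //; apply: c.
- by move=> q0; rewrite (E q.-1) ?leq_pred //; apply: d.
Qed.

Lemma card_UN (T : nat -> {set 'I_n}) (X : {set 'I_n}) p :
  T 0 = set0 -> (forall r, 0 < r <= p -> #|X :&: T r| <= 1) -> #|X :&: UN T p| <= p.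
Proof.
move=> T0; elim: p => [|p IH] h.
  by rewrite /UN big_ord_recr big_ord0 /= set0U T0 setI0 cards0.
rewrite UNS setIUr; apply: leq_trans (cardU_le _ _) _.
have := IH (fun r hr => h r (ltac:(lia))); have := h p.+1 (ltac:(lia)); lia.
Qed.

Lemma build p : p <= K -> exists T : nat -> {set 'I_n}, forall q, q <= p -> Inv T q.
Proof.
elim: p => [|p IH] hp.
  exists (fun _ => set0) => q; rewrite leqn0 => /eqP ->.
  split => //; first by rewrite sub0set.
  - by rewrite cards0.
  - by rewrite HY subxx.
have [T HT] := IH (ltnW hp).
have T0 : T 0 = set0 by have [_ c _ _ _] := HT 0 (leq0n _); apply/eqP; rewrite -cards_eq0 c.
have Tp := HT p (leqnn p).
case: Tp => Tp1 Tp2 Tp3 Tp4 Tp5.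
have hTZ r : r <= p -> T r \subset Z (vv r) by move=> h; have [a _ _ _ _] := HT r h.
have extend : forall S : {set 'I_n}, Inv (fun q => if q == p.+1 then S else T q) p.+1 ->
    exists T' : nat -> {set 'I_n}, forall q, q <= p.+1 -> Inv T' q.
  move=> S HS; exists (fun q => if q == p.+1 then S else T q) => q.
  rewrite leq_eqVlt => /orP [/eqP -> //| qp].
  apply: (@Inv_ext T) (HT q qp) => r rq.
  by have -> : (r == p.+1) = false by apply/negbTE; lia.
case: (eqVneq p.+1 K) => [pK | pK].
  apply: (extend (Z (vv p.+1))); rewrite /Inv !eqxx; split.
  - exact: subxx.
  - by rewrite HZ pK.
  - by move=> r _; rewrite subsetIr.
  - move=> _ /=.
    have -> : (p == p.+1) = false by apply/negbTE; lia.
    apply: subset_trans Tp5; rewrite /Y.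
    have -> : K.-1 = p by rewrite -pK.
    rewrite -pK; apply/subsetP => x; rewrite !inE => /andP [a b].
    by rewrite a b.
  - by rewrite subsetIr.
have pK2 : p.+2 <= K by lia.
set X := Z (vv p.+1).
set A := X :&: UN T p.
set B := A :|: (Y :&: X).
set D := X :\: (UN T p :|: Z (vv p) :|: B).
have cA : #|A| <= p.
  apply: card_UN => // r hr.
  have h1 := Hpair (ltac:(lia) : p.+1 <= K) (ltac:(lia) : r <= K) (ltac:(apply/eqP; lia) : p.+1 != r).
  apply: leq_trans _ h1.
  by apply: subset_leq_card; apply: setIS; apply: hTZ; lia.
have cY : #|Y :&: X| <= 1.
  apply: leq_trans (subset_leq_card (subsetIl _ _)) _.
  by rewrite /Y; apply: Hpair; lia.
have cB : #|B| <= p.+1 by apply: leq_trans (cardU_le _ _) _; lia.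
have BX : B \subset X by rewrite subUset subsetIl subsetIr.
have cXZ : #|X :&: Z (vv p)| <= 1 by apply: Hpair; lia.
have cD : p.+1 - #|B| <= #|D|.
  rewrite /D cardsD.
  have : #|X :&: (UN T p :|: Z (vv p) :|: B)| <= #|B| + 1.
    apply: leq_trans (_ : #|B :|: (X :&: Z (vv p))| <= _); last first.
      by apply: leq_trans (cardU_le _ _) _; rewrite leq_add2l.
    apply: subset_leq_card; apply/subsetP => x; rewrite !inE.
    case/andP => xX /orP [/orP [xU|xZ]|xB].
    - by rewrite xX xU.
    - by rewrite xX xZ !orbT.
    - by move: xB; rewrite ?inE; case/orP => ->; rewrite ?orbT.
  rewrite /X HZ; lia.
have [N [ND Nc]] := ex_sub cD.
have NB : B :&: N = set0.
  apply/setP => x; rewrite !inE; apply/negP => /andP [xB xN].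
  by move: (subsetP ND x xN); rewrite /D !inE; case/orP: xB => ->; rewrite !orbT.
have NZ x : x \in N -> x \notin Z (vv p).
  by move=> xN; move: (subsetP ND x xN); rewrite /D !inE; case: (x \in Z _); rewrite ?orbT.
apply: (extend (B :|: N)); rewrite /Inv eqxx; split.
- by rewrite subUset BX; apply: subset_trans ND (subsetDl _ _).
- by rewrite cardsU NB cards0 subn0 Nc; lia.
- move=> r rp; have -> : (r == p.+1) = false by apply/negbTE; lia.
  apply/subsetP => x; rewrite inE => /andP [xT xX].
  rewrite !inE; apply/orP; left; apply/orP; left; apply/andP; split => //.
  apply/UNP; exists r => //; lia.
- move=> _ /=; have -> : (p == p.+1) = false by apply/negbTE; lia.
  apply/subsetP => x; rewrite !inE => /andP [xZ /orP [xB|xN]]; last first.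
    by move: (NZ _ xN); rewrite xZ.
  case/orP: xB => [xA | xY].
    case/andP: xA => _ /UNP [r rp xr].
    move: rp; rewrite leq_eqVlt => /orP [/eqP <- //| rp].
    by apply: (subsetP (Tp3 r rp)); rewrite inE xr xZ.
  by apply: (subsetP Tp5); move: xY => /andP [/andP [a b] _]; rewrite !inE a b xZ.
- by apply/subsetP => x xY; rewrite !inE; apply/orP; left; apply/orP; right; move: xY; rewrite !inE.
Qed.
End Exist.

Section Exist2.
Variables (n K : nat) (Z : 'I_K.+1 -> {set 'I_n}) (vv : nat -> 'I_K.+1).
Hypothesis Hpair : forall p q, p <= K -> q <= K -> p != q -> #|Z (vv p) :&: Z (vv q)| <= 1.
Variable T : nat -> {set 'I_n}.
Hypothesis HT : forall q, q <= K -> Inv Z vv T q.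

Lemma derivB q d : q.+1 + d <= K -> #|Z (vv q) :&: UN T (q.+1 + d)| <= q + d.
Proof.
elim: d => [|d IH] h.
  rewrite addn0 addn0.
  have [_ c _ _ _] := HT (ltnW (leq_trans (leq_addr 0 _) h)).
  have [_ _ _ d _] := HT (leq_trans (leq_addr 0 _) h).
  have [_ _ c3 _ _] := HT (ltnW (leq_trans (leq_addr 0 _) h)).
  rewrite -[X in _ <= X]c; apply: subset_leq_card; apply/subsetP => x; rewrite inE => /andP [xZ /UNP [r rq xr]].
  move: rq; rewrite leq_eqVlt => /orP [/eqP E|].
    by apply: (subsetP (d (ltn0Sn _))); rewrite /= inE xZ -E xr.
  rewrite ltnS leq_eqVlt => /orP [/eqP E | rq]; first by rewrite -E.
  by apply: (subsetP (c3 r rq)); rewrite inE xr xZ.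
rewrite addnS UNS setIUr; apply: leq_trans (cardU_le _ _) _.
have h' : (q.+1 + d).+1 <= K by rewrite addnS in h.
have h1 := IH (ltnW h').
have [T1 _ _ _ _] := HT h'.
have h2 : #|Z (vv q) :&: T (q.+1 + d).+1| <= 1.
  have hq : q <= K by lia.
  have hn : q != (q.+1 + d).+1 by apply/eqP; lia.
  apply: leq_trans _ (Hpair hq h' hn).
  by apply: subset_leq_card; apply: setIS.
rewrite addnS; lia.
Qed.
End Exist2.

Section Uniq.
Variables (n k : nat) (Z : 'I_k -> {set 'I_n}) (rho : {perm 'I_k})
  (T : 'I_k -> {set 'I_n}).
Definition UU (p : 'I_k) := \bigcup_(r : 'I_k | r <= p) T r.
Hypothesis H1 : forall p, T p \subset Z (rho p).
Hypothesis H2 : forall p : 'I_k, #|T p| = p.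
Hypothesis H3 : forall p q : 'I_k, q < p -> T q :&: Z (rho p) \subset T p.
Hypothesis H4 : forall p q : 'I_k, q < p -> #|Z (rho q) :&: UU p| < p.

Definition c0 : choice_t n k := ((rho^-1)%g, [ffun i => T ((rho^-1)%g i)]).

Lemma c0_choice : is_choice Z c0.
Proof.
apply/forallP => i /=; rewrite ffunE H2 eqxx andbT.
by have := H1 ((rho^-1)%g i); rewrite permKV.
Qed.

Lemma c0_uniq (c : choice_t n k) : is_choice Z c -> munion c.2 = munion c0.2 -> c = c0.
Proof.
case: c => s S /forallP /= Hc Hm.
have HS i : S i \subset Z i by case/andP: (Hc i).
have Hs i : #|S i| = s i by case/andP: (Hc i) => _ /eqP.
have Hx x : #|[set i | x \in S i]| = #|[set i | x \in T ((rho^-1)%g i)]|.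
  have := congr1 (fun f : {ffun 'I_n -> nat} => f x) Hm; rewrite /munion /= !ffunE.
  by under [in X in _ = X -> _]eq_finset => i do rewrite ffunE.
have step : forall p : 'I_k, (forall r : 'I_k, p < r -> s (rho r) = r /\ S (rho r) = T r) ->
   s (rho p) = p /\ S (rho p) = T p.
  move=> p IH.
  set w := (s^-1)%g p.
  have sw : s w = p by rewrite /w permKV.
  set q := (rho^-1)%g w.
  have rq : rho q = w by rewrite /q permKV.
  have qp : q <= p.
    rewrite leqNgt; apply/negP => pq.
    have [h _] := IH q pq; move: h; rewrite rq sw => E.
    by move: pq; rewrite -E ltnn.
  have SU : S w \subset UU p.
    apply/subsetP => x xS; apply/negPn/negP => xU.
    have nT : forall r : 'I_k, r <= p -> x \notin T r.
      move=> r rp; apply/negP => xT; apply: (negP xU).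
      by apply/bigcupP; exists r.
    have Hpr : [set i | x \in T ((rho^-1)%g i)] \proper [set i | x \in S i].
      apply/properP; split.
        apply/subsetP => i; rewrite !inE => xT.
        have pr : p < (rho^-1)%g i by rewrite ltnNge; apply/negP => h; move: (nT _ h); rewrite xT.
        by have [_ E] := IH _ pr; rewrite permKV in E; rewrite E.
      exists w; rewrite !inE //.
      by rewrite -/q; apply: nT.
    by have := proper_card Hpr; rewrite Hx ltnn.
  have qe : q = p.
    apply: val_inj; apply/eqP; rewrite /= eqn_leq qp /= leqNgt; apply/negP => qlt.
    have h := H4 qlt; rewrite rq in h.
    have h2 : #|S w| <= #|Z w :&: UU p|.
      by apply: subset_leq_card; rewrite subsetI HS andTb.
    by move: h2; rewrite Hs sw leqNgt h.
  have wp : w = rho p by rewrite -rq qe.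
  split; first by rewrite -wp.
  apply/eqP; rewrite eqEcard H2 -wp Hs sw leqnn andbT.
  apply/subsetP => x xS.
  have xZ : x \in Z (rho p) by rewrite -wp; apply: (subsetP (HS w)).
  have /bigcupP [r rp xT] := subsetP SU x xS.
  move: rp; rewrite leq_eqVlt => /orP [/eqP/val_inj E | rp]; first by rewrite -E.
  by apply: (subsetP (H3 rp)); rewrite inE xT xZ.
have all : forall m (p : 'I_k), k - m <= p -> s (rho p) = p /\ S (rho p) = T p.
  elim=> [|m IHm] p hp.
    by move: (ltn_ord p) hp; rewrite subn0 => a b; lia.
  apply: step => r pr; apply: IHm.
  by move: hp pr; case: p => /= p _; lia.
have E p : s (rho p) = p /\ S (rho p) = T p by apply: (all k); rewrite subnn.
rewrite /c0; congr pair.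
  apply/permP => i; have [h _] := E ((rho^-1)%g i); rewrite permKV in h.
  by apply: val_inj; rewrite /= h.
apply/ffunP => i; rewrite ffunE; have [_ h] := E ((rho^-1)%g i).
by rewrite permKV in h.
Qed.
End Uniq.

Theorem theorem3 (n k : nat) (Z : 'I_k -> {set 'I_n}) :
  1 <= k -> k <= n ->
  (forall i : 'I_k, #|Z i| = k.-1) ->
  (forall I : {set 'I_k}, I != set0 -> #|\bigcap_(i in I) Z i| <= k - #|I|) ->
  (forall i i' : 'I_k, i != i' -> #|Z i :&: Z i'| <= 1) ->
  exists m : {ffun 'I_n -> nat},
    #|[set c : choice_t n k | is_choice Z c && (munion c.2 == m)]| = 1.
Proof.
case: k Z => [//|K] Z _ _ HZ Hcap HP.
have HZ' i : #|Z i| = K by rewrite HZ.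
have i1 : K.-1 < K.+1 by lia.
have i2 : K < K.+1 by lia.
have i0 : 0 < K.+1 by lia.
have Hint : \bigcap_(i in [set: 'I_K.+1]) Z i = set0.
  apply/eqP; rewrite -cards_eq0 -leqn0.
  have hT : [set: 'I_K.+1] != set0 by apply/set0Pn; exists ord0; rewrite inE.
  by have := Hcap _ hT; rewrite cardsT card_ord subnn.
have [rho Hrho] : exists rho : {perm 'I_K.+1},
    Z (rho (inord K.-1)) :&: Z (rho (inord K)) :&: Z (rho (inord 0)) = set0.
  case: (eqVneq (Z (inord K.-1) :&: Z (inord K) :&: Z (inord 0)) set0) => [E|].
    by exists 1%g; rewrite !perm1.
  case/set0Pn => y; rewrite !inE => /andP [/andP [ya yb] y0].
  have [t yt] : exists t, y \notin Z t.
    case: (pickP (fun t => y \notin Z t)) => [t yt|H]; first by exists t.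
    have : y \in \bigcap_(i in [set: 'I_K.+1]) Z i.
      by apply/bigcapP => i _; have := H i; rewrite /= => /negbFE.
    by rewrite Hint inE.
  have ta : t != inord K.-1 by apply: contraNneq yt => ->.
  have tb : t != inord K by apply: contraNneq yt => ->.
  have t0 : t != inord 0 by apply: contraNneq yt => ->.
  have tK : (t : nat) <= K by rewrite -ltnS.
  have K2 : 2 <= K.
    move: ta tb t0; rewrite -!(inj_eq val_inj) /= !inordK //; lia.
  have a0 : (inord 0 : 'I_K.+1) != inord K.-1.
    by rewrite -(inj_eq val_inj) /= !inordK //; lia.
  have b0 : (inord 0 : 'I_K.+1) != inord K.
    by rewrite -(inj_eq val_inj) /= !inordK //; lia.
  exists (tperm (inord 0) t).
  rewrite tpermL !tpermD //.
  apply/setP => x; rewrite !inE; apply/negP => /andP [/andP [xa xb] xt].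
  have ab : (inord K.-1 : 'I_K.+1) != inord K.
    by rewrite -(inj_eq val_inj) /= !inordK //; lia.
  have := HP _ _ ab.
  case: (eqVneq x y) => [exy|nxy]; first by move: xt; rewrite exy (negbTE yt).
  have : [set x; y] \subset Z (inord K.-1) :&: Z (inord K).
    by apply/subsetP => z; rewrite !inE => /orP [/eqP ->|/eqP ->]; rewrite ?xa ?xb ?ya ?yb.
  move/subset_leq_card; rewrite cards2 nxy => h1 h2.
  by have := leq_trans h1 h2.
pose vv (p : nat) := rho (inord p).
have Hpair : forall p q, p <= K -> q <= K -> p != q -> #|Z (vv p) :&: Z (vv q)| <= 1.
  move=> p q hp hq pq; apply: HP; rewrite /vv (inj_eq perm_inj).
  by rewrite -(inj_eq val_inj) /= !inordK.
have HY : Y Z vv :&: Z (vv 0) = set0 by [].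
have [T HT] := build HZ' Hpair HY (leqnn K).
pose T' (p : 'I_K.+1) := T p.
have vvE (p : 'I_K.+1) : vv p = rho p by rewrite /vv inord_val.
have h1 : forall p, T' p \subset Z (rho p).
  by move=> p; have [a _ _ _ _] := HT p (ltn_ord p); rewrite -vvE.
have h2 : forall p : 'I_K.+1, #|T' p| = p.
  by move=> p; have [_ a _ _ _] := HT p (ltn_ord p).
have h3 : forall p q : 'I_K.+1, q < p -> T' q :&: Z (rho p) \subset T' p.
  by move=> p q qp; have [_ _ a _ _] := HT p (ltn_ord p); rewrite -vvE; apply: a.
have UUE (p : 'I_K.+1) : UU T' p = UN T p.
  apply/setP => x; apply/bigcupP/UNP => [[r rp xr]|[r rp xr]].
    by exists r.
  have rK : r < K.+1 by apply: leq_ltn_trans rp (ltn_ord p).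
  by exists (Ordinal rK).
have h4 : forall p q : 'I_K.+1, q < p -> #|Z (rho q) :&: UU T' p| < p.
  move=> p q qp; rewrite UUE -vvE.
  have e : (p : nat) = q.+1 + (p - q.+1) by lia.
  have hh : q.+1 + (p - q.+1) <= K by have := ltn_ord p; lia.
  have := @derivB n K Z vv Hpair T HT q (p - q.+1) hh.
  rewrite -e; lia.
exists (munion (c0 rho T').2).
have -> : [set c : choice_t n K.+1 | is_choice Z c && (munion c.2 == munion (c0 rho T').2)]
   = [set c0 rho T'].
  apply/setP => c; rewrite !inE; apply/andP/eqP => [[hc /eqP hm]|->].
    exact: (c0_uniq h2 h3 h4 hc hm).
  by split => //; apply: (c0_choice h1 h2).
by rewrite cards1.
Qed.
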